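(* Let $\mathbf{M}$ be a nonsingular $D\times D$ integer matrix and $\bm{\Gamma}_1,\dots,\bm{\Gamma}_L$ ($L\ge2$) nonsingular $D\times D$ integer matrices that are pairwise commutative and coprime; set $\mathbf{M}_i=\mathbf{M}\bm{\Gamma}_i$. Let $\mathbf{U}\mathbf{M}\mathbf{V}=\bm{\Lambda}$ be a Smith normal form decomposition ($\mathbf{U},\mathbf{V}$ unimodular, $\bm{\Lambda}$ diagonal). Fix unimodular $\mathbf{U}_1$ and let $\mathbf{m}\in\mathcal{A}_1$ with remainders $\mathbf{r}_i=\langle\mathbf{m}\rangle_{\mathbf{M}_i}$ and folding vectors $\mathbf{n}_i$ ($\mathbf{m}=\mathbf{M}_i\mathbf{n}_i+\mathbf{r}_i$). Let $\widetilde{\mathbf{r}}_i=\mathbf{r}_i+\triangle\mathbf{r}_i\in\mathbb{Z}^D$ be erroneous remainders and let $\widetilde{\mathbf{n}}_1,\dots,\widetilde{\mathbf{n}}_L$ be the output of Algorithm 2. Define $\bm{\vartheta}_i=Q_{\bm{\Lambda}}(\mathbf{U}(\triangle\mathbf{r}_i-\triangle\mathbf{r}_1))$, $2\le i\le L$. Then $\widetilde{\mathbf{n}}_i=\mathbf{n}_i$ for all $i$ if and only if $\bm{\vartheta}_i=\mathbf{0}$ for all $2\le i\le L$. Moreover: (1) if $\lVert\mathbf{U}(\triangle\mathbf{r}_i-\triangle\mathbf{r}_1)\rVert<\lambda_{\mathrm{LAT}(\bm{\Lambda})}/2$ for all $2\le i\le L$, then all $\bm{\vartheta}_i=\mathbf{0}$;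 (2) if $\lVert\triangle\mathbf{r}_i\rVert\le\tau$ for all $i$ and $\tau<\lambda_{\mathrm{LAT}(\bm{\Lambda})}/(4\lVert\mathbf{U}\rVert_* )$, then all $\bm{\vartheta}_i=\mathbf{0}$. When the folding vectors are correctly determined, $\widetilde{\mathbf{m}}=\frac1L\sum_{i=1}^L(\mathbf{M}_i\mathbf{n}_i+\widetilde{\mathbf{r}}_i)$ satisfies $\lVert\widetilde{\mathbf{m}}-\mathbf{m}\rVert\le\tau$ whenever $\lVert\triangle\mathbf{r}_i\rVert\le\tau$ for all $i$.
   Context: All matrices are $D\times D$; unimodular means integer with determinant $\pm1$; commuting nonsingular integer matrices are coprime if all their common left (equivalently right) divisors are unimodular. $\mathrm{LAT}(\mathbf{A})=\{\mathbf{A}\mathbf{n}:\mathbf{n}\in\mathbb{Z}^D\}$. $\mathcal{N}(\mathbf{A})=\{\mathbf{k}\in\mathbb{Z}^D:\mathbf{k}=\mathbf{A}\mathbf{x},\ \mathbf{x}\in[0,1)^D\}$; $\langle\mathbf{m}\rangle_{\mathbf{A}}$ is the unique $\mathbf{r}\in\mathcal{N}(\mathbf{A})$ with $\mathbf{m}-\mathbf{r}\in\mathrm{LAT}(\mathbf{A})$; $\mathbf{x}\equiv\mathbf{y}\bmod\mathbf{A}$ means $\mathbf{x}-\mathbf{y}\in\mathrm{LAT}(\mathbf{A})$. $\mathcal{A}_1=\{\mathbf{m}\in\mathbb{Z}^D:\lfloor\mathbf{M}_1^{-1}\mathbf{m}\rfloor\in\mathcal{N}(\bm{\Gamma}_2\cdots\bm{\Gamma}_L\mathbf{U}_1)\}$.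 $\lVert\cdot\rVert$ is a fixed norm on $\mathbb{R}^D$, $\lVert\mathbf{U}\rVert_*=\sup_{\lVert\mathbf{x}\rVert=1}\lVert\mathbf{U}\mathbf{x}\rVert$, and $\lambda_{\mathrm{LAT}(\bm{\Lambda})}=\min\{\lVert\mathbf{v}\rVert:\mathbf{v}\in\mathrm{LAT}(\bm{\Lambda})\setminus\{\mathbf{0}\}\}$. $Q_{\bm{\Lambda}}:\mathbb{R}^D\to\mathrm{LAT}(\bm{\Lambda})$ is a fixed closest-lattice-point map ($Q_{\bm{\Lambda}}(\mathbf{w})\in\arg\min_{\mathbf{p}\in\mathrm{LAT}(\bm{\Lambda})}\lVert\mathbf{p}-\mathbf{w}\rVert$) with $Q_{\bm{\Lambda}}(\mathbf{w}+\mathbf{l})=Q_{\bm{\Lambda}}(\mathbf{w})+\mathbf{l}$ for $\mathbf{l}\in\mathrm{LAT}(\bm{\Lambda})$. Algorithm 2: (i) $\mathbf{p}_i=Q_{\bm{\Lambda}}(\mathbf{U}(\widetilde{\mathbf{r}}_i-\widetilde{\mathbf{r}}_1))$, $2\le i\le L$; (ii) $\bm{\varpi}_i=\langle\bm{\Lambda}^{-1}\mathbf{p}_i\rangle_{\mathbf{V}^{-1}\bm{\Gamma}_i}$; (iii) $\bm{\psi}_1$ is the unique element of $\mathcal{N}(\mathbf{V}^{-1}\bm{\Gamma}_1\bm{\Gamma}_2\cdots\bm{\Gamma}_L\mathbf{U}_1)$ with $\bm{\psi}_1\equiv\mathbf{0}\bmod\mathbf{V}^{-1}\bm{\Gamma}_1$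 and $\bm{\psi}_1\equiv\bm{\varpi}_i\bmod\mathbf{V}^{-1}\bm{\Gamma}_i$ for $2\le i\le L$; (iv) $\widetilde{\mathbf{n}}_1=\bm{\Gamma}_1^{-1}\mathbf{V}\bm{\psi}_1$ and $\widetilde{\mathbf{n}}_i=\bm{\Gamma}_i^{-1}\mathbf{V}(\bm{\psi}_1-\bm{\Lambda}^{-1}\mathbf{p}_i)$ for $2\le i\le L$. *)

(* Defs.v *)
From HB Require Import structures.
From mathcomp Require Import all_boot all_order all_algebra.
Set Implicit Arguments. Unset Strict Implicit. Unset Printing Implicit Defensive.
Import Order.TTheory GRing.Theory Num.Theory.
Local Open Scope ring_scope.

Section Defs.
Context {R : archiRealFieldType}.
Context {D : nat}.

Definition toR {m n} (A : 'M[int]_(m, n)) : 'M[R]_(m, n) := map_mx intr A.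

Definition nonsingular (A : 'M[int]_D) : Prop := \det A != 0.
Definition unimodular (A : 'M[int]_D) : Prop := (\det A = 1) \/ (\det A = -1).

Definition mx_coprime (A B : 'M[int]_D) : Prop :=
  forall C X Y : 'M[int]_D, A = C *m X -> B = C *m Y -> unimodular C.

Definition smith_diag (Lam : 'M[int]_D) : Prop :=
  is_diag_mx Lam /\ (forall i : 'I_D, 0 <= Lam i i) /\
  (forall i j : 'I_D, (i <= j)%N -> (Lam i i %| Lam j j)%Z).

Definition inLat (A : 'M[R]_D) (v : 'cV[R]_D) : Prop :=
  exists n : 'cV[int]_D, v = A *m toR n.

Definition inN (A : 'M[R]_D) (k : 'cV[int]_D) : Prop :=
  exists x : 'cV[R]_D, (forall j : 'I_D, 0 <= x j 0 < 1) /\ toR k = A *m x.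

Definition isRem (A : 'M[R]_D) (m : 'cV[R]_D) (r : 'cV[int]_D) : Prop :=
  inN A r /\ inLat A (m - toR r).

Definition floorv (x : 'cV[R]_D) : 'cV[int]_D := map_mx (@Num.floor R) x.

Definition is_norm (nrm : 'cV[R]_D -> R) : Prop :=
  (forall x, 0 <= nrm x) /\ (forall x, nrm x = 0 -> x = 0) /\
  (forall (a : R) x, nrm (a *: x) = `|a| * nrm x) /\
  (forall x y, nrm (x + y) <= nrm x + nrm y).

Definition is_opnorm (nrm : 'cV[R]_D -> R) (A : 'M[R]_D) (c : R) : Prop :=
  (forall x, nrm x = 1 -> nrm (A *m x) <= c) /\
  (forall c', (forall x, nrm x = 1 -> nrm (A *m x) <= c') -> c <= c').

Definition is_lat_min (nrm : 'cV[R]_D -> R) (A : 'M[R]_D) (lam : R) : Prop :=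
  (exists v, inLat A v /\ v != 0 /\ nrm v = lam) /\
  (forall v, inLat A v -> v != 0 -> lam <= nrm v).

Definition is_closest_map (nrm : 'cV[R]_D -> R) (A : 'M[R]_D)
  (Q : 'cV[R]_D -> 'cV[R]_D) : Prop :=
  (forall w, inLat A (Q w)) /\
  (forall w p, inLat A p -> nrm (Q w - w) <= nrm (p - w)) /\
  (forall w l, inLat A l -> Q (w + l) = Q w + l).

End Defs.

(* Main.v *)
Require Import Defs.
From HB Require Import structures.
From mathcomp Require Import all_boot all_order all_algebra.
From mathcomp Require Import ring zify lra.
Import Order.TTheory GRing.Theory Num.Theory.
Set Implicit Arguments. Unset Strict Implicit.
Local Open Scope ring_scope.

Lemma unimod_unit (D : nat) (A : 'M[int]_D) : unimodular A -> A \in unitmx.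
Proof. by rewrite unitmxE => -[] ->; rewrite ?unitr1 ?unitrN1. Qed.

Lemma bezout_left (D : nat) (A B : 'M[int]_D) :
  \det A != 0 -> A *m B = B *m A -> mx_coprime A B ->
  exists P Q : 'M[int]_D, P *m B - Q *m A = 1%:M.
Proof.
move=> dA AB cop.
have [Lm uL [Rm uR [d _ E]]] := int_Smith_normal_form (row_mx A B).
set Del := \matrix_(i, j) _ in E.
have DelE : Del = row_mx (lsubmx Del) 0.
  rewrite -{1}(hsubmxK Del); congr row_mx; apply/matrixP => i j.
  rewrite !mxE /=; case: eqP => // hij.
  by have := ltn_ord i; rewrite hij ltnNge leq_addr.
set C := Lm *m lsubmx Del.
have E2 : row_mx A B = C *m row_mx (ulsubmx Rm) (ursubmx Rm).
  rewrite E DelE -{1}(vsubmxK Rm) -mulmxA mul_row_col mul0mx addr0 mulmxA.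
  by rewrite /C /ulsubmx /ursubmx hsubmxK.
move: E2; rewrite mul_mx_row => /eq_row_mx [EA EB].
have uC := unimod_unit (cop _ _ _ EA EB).
set Em := dlsubmx Rm; set Fm := drsubmx Rm.
have EW : block_mx A B Em Fm = block_mx C 0 0 1%:M *m Rm.
  rewrite -[in RHS](submxK Rm) mulmx_block !mul0mx !mul1mx !addr0 !add0r.
  by rewrite -EA -EB.
set T := Em *m B - Fm *m A.
have ET : block_mx A B Em Fm *m block_mx 1%:M B 0 (- A) = block_mx A 0 Em T.
  rewrite mulmx_block !mulmx1 !mulmx0 !addr0 !mulmxN.
  suff -> : A *m B - B *m A = 0 by [].
  by rewrite AB subrr.
have dW : \det (block_mx A B Em Fm) \is a GRing.unit.
  by rewrite EW det_mulmx det_ublock det1 mulr1 unitrM -!unitmxE uC uR.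
have dT : \det T \is a GRing.unit.
  have := congr1 determinant ET.
  rewrite det_mulmx det_ublock det_lblock => h; move: h; rewrite det1 mul1r -scaleN1r detZ => h.
  have : \det A * \det T = \det A * (\det (block_mx A B Em Fm) * (-1) ^+ D).
    by rewrite -h; ring.
  move/(mulfI dA) ->; by rewrite unitrM dW unitrX // unitrN1.
have uT : T \in unitmx by rewrite unitmxE.
exists (invmx T *m Em), (invmx T *m Fm).
by rewrite -!mulmxA -mulmxBr mulVmx.
Qed.

Lemma key_div (D : nat) (A B : 'M[int]_D) (a b : 'cV[int]_D) :
  \det A != 0 -> A *m B = B *m A -> mx_coprime A B ->
  A *m a = B *m b -> exists z, a = B *m z.
Proof.
move=> dA AB cop Eab.
have [P [Q PQ]] := bezout_left dA AB cop.
have cAdj : B *m \adj A = \adj A *m B.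
  apply/eqP; rewrite -subr_eq0.
  suff : \det A *: (B *m \adj A - \adj A *m B) == 0 by rewrite scalemx_eq0 (negbTE dA).
  rewrite -mul_scalar_mx -mul_adj_mx -mulmxA mulmxBr !mulmxA.
  by rewrite AB -(mulmxA B) !mul_mx_adj mul_mx_scalar mul_scalar_mx subrr mulmx0.
have h1 : B *m (\adj A *m b) = \det A *: a.
  by rewrite mulmxA cAdj -mulmxA -Eab mulmxA mul_adj_mx mul_scalar_mx.
have h2 : \adj A *m b = \det A *: (P *m a - Q *m b).
  rewrite -[LHS]mul1mx -PQ mulmxBl -!mulmxA h1 (mulmxA A) mul_mx_adj mul_scalar_mx.
  by rewrite -!scalemxAr scalerBr.
exists (P *m a - Q *m b).
apply/eqP; rewrite eq_sym -subr_eq0.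
suff : \det A *: (B *m (P *m a - Q *m b) - a) == 0 by rewrite scalemx_eq0 (negbTE dA).
by rewrite scalerBr scalemxAr -h2 h1 subrr.
Qed.

Lemma prod_div (D : nat) (G : nat -> 'M[int]_D) (L : nat) :
  (forall i, (i < L)%N -> \det (G i) != 0) ->
  (forall i j, (i < L)%N -> (j < L)%N -> i <> j ->
     G i *m G j = G j *m G i /\ mx_coprime (G i) (G j)) ->
  forall x : 'cV[int]_D, (forall i, (i < L)%N -> exists c, x = G i *m c) ->
  exists c, x = \big[mulmx/1%:M]_(0 <= i < L) G i *m c.
Proof.
move=> dG cG x hx.
have peel : forall j s, (j < s)%N -> (j < L)%N -> forall a : 'cV[int]_D,
    (exists c, \big[mulmx/1%:M]_(s <= i < L) G i *m a = G j *m c) ->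
    exists c, a = G j *m c.
  move=> j s js jL.
  rewrite big_seq.
  apply: (big_ind (fun X : 'M[int]_D => forall a : 'cV[int]_D,
    (exists c, X *m a = G j *m c) -> exists c, a = G j *m c)).
  - by move=> a [c]; rewrite mul1mx => ->; exists c.
  - move=> X Y hX hY a h; apply: hY; apply: hX.
    by case: h => c; rewrite mulmxA => ->; exists c.
  - move=> i; rewrite mem_index_iota => /andP [si iL] a [c hc].
    have ij : i <> j by move=> e; move: js; rewrite -e ltnNge si.
    have [cij copij] := cG i j iL jL ij.
    exact: (key_div (dG i iL) cij copij hc).
have comm : forall j s, (j < s)%N -> (j < L)%N ->
    G j *m \big[mulmx/1%:M]_(s <= i < L) G i = \big[mulmx/1%:M]_(s <= i < L) G i *m G j.
  move=> j s js jL; rewrite big_seq.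
  apply: (big_ind (fun X : 'M[int]_D => G j *m X = X *m G j)).
  - by rewrite mulmx1 mul1mx.
  - by move=> X Y hX hY; rewrite mulmxA hX -!mulmxA hY.
  - move=> i; rewrite mem_index_iota => /andP [si iL].
    have ij : i <> j by move=> e; move: js; rewrite -e ltnNge si.
    by have [-> _] := cG i j iL jL ij.
suff : forall t, (t <= L)%N -> exists c, x = \big[mulmx/1%:M]_(L - t <= i < L) G i *m c.
  by move/(_ L (leqnn L)); rewrite subnn.
elim=> [|t IH] tL.
  by exists x; rewrite subn0 big_geq // mul1mx.
have [a ha] := IH (ltnW tL).
set j := (L - t.+1)%N.
have jL : (j < L)%N by rewrite /j; lia.
have Ej : (L - t)%N = j.+1 by rewrite /j; lia.
rewrite Ej in ha.
have [c' hc'] := hx j jL.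
have [c hc] := peel j j.+1 (ltnSn j) jL a (ex_intro _ c' (etrans (esym ha) hc')).
exists c; rewrite ha hc [in RHS]big_ltn //.
by rewrite comm // mulmxA.
Qed.

Lemma toRM (R : archiFieldType) m n p (A : 'M[int]_(m, n)) (B : 'M[int]_(n, p)) :
  toR (R:=R) (A *m B) = toR A *m toR B.
Proof. exact: map_mxM. Qed.
Lemma toRD (R : archiFieldType) m n (A B : 'M[int]_(m, n)) :
  toR (R:=R) (A + B) = toR A + toR B.
Proof. exact: map_mxD. Qed.
Lemma toRB (R : archiFieldType) m n (A B : 'M[int]_(m, n)) :
  toR (R:=R) (A - B) = toR A - toR B.
Proof. exact: map_mxB. Qed.
Lemma toRN (R : archiFieldType) m n (A : 'M[int]_(m, n)) :
  toR (R:=R) (- A) = - toR A.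
Proof. exact: map_mxN. Qed.
Lemma toR1 (R : archiFieldType) n : toR (R:=R) (1%:M : 'M[int]_n) = 1%:M.
Proof. exact: map_mx1. Qed.
Lemma toR0 (R : archiFieldType) m n : toR (R:=R) (0 : 'M[int]_(m, n)) = 0.
Proof. exact: map_mx0. Qed.
Lemma toR_inj (R : archiFieldType) m n (A B : 'M[int]_(m, n)) :
  toR (R:=R) A = toR B -> A = B.
Proof.
move/matrixP => h; apply/matrixP => i j; have := h i j; rewrite !mxE.
exact: intr_inj.
Qed.
Lemma toR_det (R : archiFieldType) n (A : 'M[int]_n) :
  \det (toR (R:=R) A) = (\det A)%:~R.
Proof. exact: det_map_mx. Qed.
Lemma toR_unit (R : archiFieldType) n (A : 'M[int]_n) :
  \det A != 0 -> toR (R:=R) A \in unitmx.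
Proof. by rewrite unitmxE toR_det unitfE intr_eq0. Qed.
Lemma toR_inv (R : archiFieldType) n (A : 'M[int]_n) :
  A \in unitmx -> invmx (toR (R:=R) A) = toR (invmx A).
Proof.
move=> uA.
have uR : toR (R:=R) A \in unitmx.
  by apply: toR_unit; move: uA; rewrite unitmxE; apply: contraTN => /eqP ->; rewrite unitr0.
by rewrite -[LHS]mulmx1 -(toR1 R n) -(mulmxV uA) toRM mulmxA mulVmx // mul1mx.
Qed.
Lemma latE (R : archiFieldType) n (A : 'M[int]_n) (v : 'cV[int]_n) :
  inLat (toR (R:=R) A) (toR v) -> exists c, v = A *m c.
Proof. by case=> c; rewrite -toRM => /toR_inj ->; exists c. Qed.
Lemma latI (R : archiFieldType) n (A : 'M[int]_n) (v c : 'cV[int]_n) :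
  v = A *m c -> inLat (toR (R:=R) A) (toR v).
Proof. by move=> ->; exists c; rewrite toRM. Qed.

Lemma N_uniq (R : archiFieldType) n (A : 'M[int]_n) (u v k : 'cV[int]_n) :
  \det A != 0 -> inN (toR (R:=R) A) u -> inN (toR (R:=R) A) v ->
  u - v = A *m k -> u = v.
Proof.
move=> dA [x [hx ex]] [y [hy ey]] e.
have uA := toR_unit R dA.
have : toR (R:=R) A *m (x - y) = toR A *m toR k by rewrite mulmxBr -ex -ey -toRM -e toRB.
move/(congr1 (mulmx (invmx (toR (R:=R) A)))); rewrite !mulKmx // => exy.
suff k0 : k = 0 by apply/eqP; rewrite -subr_eq0 e k0 mulmx0.
apply/matrixP => i j; rewrite mxE; rewrite (ord1 j).
have ek : x i 0 - y i 0 = (k i 0)%:~R.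
  by have := congr1 (fun M : 'cV[R]_n => M i 0) exy; rewrite !mxE.
have := hx i; have := hy i => /andP [y0 y1] /andP [x0 x1].
have h1 : (k i 0)%:~R < (1 : R) by rewrite -ek; lra.
have h2 : (-1 : R) < (k i 0)%:~R by rewrite -ek; lra.
have o1 : (1 : R) = (1 : int)%:~R by [].
move: h1 h2; rewrite o1 -intrN !ltr_int; lia.
Qed.

Lemma nrm0 (R : archiFieldType) D (nrm : 'cV[R]_D -> R) : is_norm nrm -> nrm 0 = 0.
Proof. by case=> _ [_ [hs _]]; rewrite -(scale0r (0 : 'cV[R]_D)) hs normr0 mul0r. Qed.
Lemma nrmN (R : archiFieldType) D (nrm : 'cV[R]_D -> R) x : is_norm nrm -> nrm (- x) = nrm x.
Proof. by case=> _ [_ [hs _]]; rewrite -scaleN1r hs normrN normr1 mul1r. Qed.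
Lemma nrmB (R : archiFieldType) D (nrm : 'cV[R]_D -> R) x y : is_norm nrm ->
  nrm (x - y) <= nrm x + nrm y.
Proof. by move=> hN; case: (hN) => _ [_ [_ ht]]; rewrite -(nrmN y hN); apply: ht. Qed.
Lemma nrm_sum (R : archiFieldType) D (nrm : 'cV[R]_D -> R) (f : nat -> 'cV[R]_D) L :
  is_norm nrm -> nrm (\sum_(0 <= i < L) f i) <= \sum_(0 <= i < L) nrm (f i).
Proof.
move=> hN; case: (hN) => _ [_ [_ ht]].
elim: L => [|L IH]; first by rewrite !big_geq // (nrm0 hN).
rewrite !big_nat_recr //=; apply: le_trans (ht _ _) _; exact: lerD.
Qed.
Lemma opnorm_bound (R : archiFieldType) D (nrm : 'cV[R]_D -> R) (A : 'M[R]_D) c x :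
  is_norm nrm -> is_opnorm nrm A c -> nrm (A *m x) <= c * nrm x.
Proof.
move=> hN [hc _]; case: (hN) => h0 [hdef [hs _]].
have [x0|xn0] := eqVneq (nrm x) 0.
  by rewrite x0 mulr0 (hdef _ x0) mulmx0 (nrm0 hN).
have xp : 0 < nrm x by rewrite lt_def xn0 h0.
have := hc ((nrm x)^-1 *: x); rewrite hs -scalemxAr hs ger0_norm ?invr_ge0 ?h0 //.
rewrite mulVf // => /(_ erefl); rewrite -(ler_pM2l xp) mulrA divff // mul1r => h.
by rewrite mulrC.
Qed.
Lemma closest0 (R : archiFieldType) D (nrm : 'cV[R]_D -> R) (A : 'M[R]_D) Q lam w :
  is_norm nrm -> is_closest_map nrm A Q -> is_lat_min nrm A lam ->
  nrm w < lam / 2 -> Q w = 0.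
Proof.
move=> hN [hQ1 [hQ2 _]] [_ hmin] hw.
case: (hN) => _ [_ [_ ht]].
have l0 : inLat A 0 by exists 0; rewrite toR0 mulmx0.
have h1 := hQ2 w 0 l0; rewrite sub0r (nrmN _ hN) in h1.
have h2 : nrm (Q w) <= nrm (Q w - w) + nrm w.
  by have := ht (Q w - w) w; rewrite subrK.
apply/eqP; apply: contraT => hn.
have := hmin _ (hQ1 w) hn; lra.
Qed.

Lemma grp_id (V : zmodType) (a s v x : V) : a - s = (a - v) - ((s - x) - v) - x.
Proof. by rewrite (opprB (s - x) v) addrA subrK (opprB s x) addrA addrAC addrK. Qed.

Lemma solveL (R : archiFieldType) n (G V Vi : 'M[R]_n) (z t : 'cV[R]_n) :
  G \in unitmx -> Vi *m V = 1%:M -> invmx G *m V *m z = t -> z = Vi *m G *m t.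
Proof. by move=> uG hV <-; rewrite -!mulmxA mulKVmx // mulmxA hV mul1mx. Qed.

Lemma unit_det0 n (A : 'M[int]_n) : A \in unitmx -> \det A != 0.
Proof. by rewrite unitmxE; apply: contraTN => /eqP ->; rewrite unitr0. Qed.

Unset Implicit Arguments.

(* Indices: paper's i = 1..L corresponds to i = 0..L-1 here. *)
Theorem theorem4
  (R : archiFieldType) (D : nat) (nrm : 'cV[R]_D -> R)
  (M : 'M[int]_D) (L : nat) (Gam : nat -> 'M[int]_D)
  (U V Lam U1 : 'M[int]_D)
  (Q : 'cV[R]_D -> 'cV[R]_D) (lam : R)
  (m : 'cV[int]_D) (r n dr : nat -> 'cV[int]_D)
  (varpi : nat -> 'cV[int]_D) (psi1 : 'cV[int]_D) :
  is_norm nrm ->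
  (2 <= L)%N ->
  nonsingular M ->
  (forall i, (i < L)%N -> nonsingular (Gam i)) ->
  (forall i j, (i < L)%N -> (j < L)%N -> i <> j ->
     Gam i *m Gam j = Gam j *m Gam i /\ mx_coprime (Gam i) (Gam j)) ->
  unimodular U -> unimodular V -> smith_diag Lam -> U *m M *m V = Lam ->
  unimodular U1 ->
  is_closest_map nrm (toR Lam) Q ->
  is_lat_min nrm (toR Lam) lam ->
  let Mi i := M *m Gam i in
  let Gprod := \big[mulmx/1%:M]_(1 <= i < L) Gam i in
  (* m in A_1 *)
  inN (R:=R) (toR (Gprod *m U1)) (floorv (R:=R) (invmx (toR (Mi 0%N)) *m toR m)) ->
  (* remainders and folding vectors *)
  (forall i, (i < L)%N -> isRem (R:=R) (toR (Mi i)) (toR m) (r i)) ->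
  (forall i, (i < L)%N -> m = Mi i *m n i + r i) ->
  (* erroneous remainders *)
  let rt i := r i + dr i in
  (* Algorithm 2 *)
  let p i := Q (toR U *m toR (rt i - rt 0%N)) in
  let Vinv := invmx (toR V) in
  (forall i, (1 <= i < L)%N ->
     isRem (Vinv *m toR (Gam i)) (invmx (toR Lam) *m p i) (varpi i)) ->
  inN (Vinv *m toR (Gam 0%N) *m toR Gprod *m toR U1) psi1 ->
  inLat (Vinv *m toR (Gam 0%N)) (toR psi1) ->
  (forall i, (1 <= i < L)%N ->
     inLat (Vinv *m toR (Gam i)) (toR psi1 - toR (varpi i))) ->
  let nt i := if i == 0%N then invmx (toR (Gam 0%N)) *m toR V *m toR psi1
              else invmx (toR (Gam i)) *m toR V *m
                     (toR psi1 - invmx (toR Lam) *m p i) in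
  let theta i := Q (toR U *m toR (dr i - dr 0%N)) in
  ((forall i, (i < L)%N -> nt i = toR (n i)) <->
   (forall i, (1 <= i < L)%N -> theta i = 0)) /\
  ((forall i, (1 <= i < L)%N -> nrm (toR U *m toR (dr i - dr 0%N)) < lam / 2) ->
   forall i, (1 <= i < L)%N -> theta i = 0) /\
  (forall tau c, is_opnorm nrm (toR U) c ->
   (forall i, (i < L)%N -> nrm (toR (dr i)) <= tau) ->
   tau < lam / (4 * c) ->
   forall i, (1 <= i < L)%N -> theta i = 0) /\
  (forall tau, (forall i, (i < L)%N -> nrm (toR (dr i)) <= tau) ->
   let mt := L%:R^-1 *: \sum_(0 <= i < L) toR (Mi i *m n i + rt i) in
   nrm (mt - toR m) <= tau).
Proof.
move=> hN L2 dM dG cG uU uV sL ELam uU1 hQ hlam Mi Gprod hA1 hrem hn rt p Vinv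
  hvarpi hpsiN hpsi0 hpsii nt theta.
have L0 : (0 < L)%N by apply: leq_trans L2.
have lam0 : 0 <= lam.
  by case: hlam => [[v [_ [_ <-]]] _]; case: hN.
have part2 : (forall i, (1 <= i < L)%N -> nrm (toR U *m toR (dr i - dr 0%N)) < lam / 2) ->
   forall i, (1 <= i < L)%N -> theta i = 0.
  by move=> h i hi; apply: (closest0 hN hQ hlam); apply: h.
split; [|split; [exact: part2|split]].
- have uVm : V \in unitmx := unimod_unit uV.
  have uU1m : U1 \in unitmx := unimod_unit uU1.
  set Vi := invmx V.
  have VVi : V *m Vi = 1%:M := mulmxV uVm.
  have ViV : Vi *m V = 1%:M := mulVmx uVm.
  have eVinv : Vinv = toR Vi by rewrite /Vinv toR_inv.
  have VVR : forall (X : 'cV[R]_D), toR V *m (toR Vi *m X) = X.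
    by move=> X; rewrite mulmxA -toRM VVi toR1 mul1mx.
  have ViVR : toR (R:=R) Vi *m toR V = 1%:M by rewrite -toRM ViV toR1.
  have dLam : \det Lam != 0.
    rewrite -ELam !det_mulmx !mulf_neq0 //.
    + by apply: unit_det0; apply: unimod_unit.
    + by apply: unit_det0.
  have uLR : toR (R:=R) Lam \in unitmx := toR_unit R dLam.
  have uGR : forall i, (i < L)%N -> toR (R:=R) (Gam i) \in unitmx.
    by move=> i iL; apply: toR_unit; apply: dG.
  set w := fun i => Vi *m (Gam 0%N *m n 0%N - Gam i *m n i).
  have hUr : forall i, (i < L)%N -> U *m (r i - r 0%N) = Lam *m w i.
    move=> i iL.
    have ri : forall j, (j < L)%N -> r j = m - Mi j *m n j.
      by move=> j jL; rewrite {1}(hn j jL) addrAC subrr add0r.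
    rewrite (ri i iL) (ri 0%N L0) opprB addrC addrA subrK /Mi -!mulmxA -mulmxBr.
    by rewrite /w -ELam -!mulmxA mulKVmx.
  have hp : forall i, (i < L)%N -> p i = theta i + toR Lam *m toR (w i).
    move=> i iL; rewrite /p /theta.
    have -> : toR U *m toR (rt i - rt 0%N) =
        toR U *m toR (dr i - dr 0%N) + toR (R:=R) Lam *m toR (w i).
      rewrite -!toRM -toRD -hUr // -mulmxDr /rt; congr (toR (U *m _)).
      by rewrite opprD addrACA addrC.
    case: hQ => _ [_ hQ3]; apply: hQ3; by exists (w i).
  have hLp : forall i, (i < L)%N ->
      invmx (toR Lam) *m p i = invmx (toR Lam) *m theta i + toR (w i).
    by move=> i iL; rewrite hp // mulmxDr mulKmx.
  set psis := Vi *m Gam 0%N *m n 0%N.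
  have ewj : forall j, w j = psis - Vi *m Gam j *m n j.
    by move=> j; rewrite /w mulmxBr !mulmxA.
  split.
  + move=> hnt i /andP [i1 iL].
    have h0 := hnt 0%N L0; rewrite /nt /= in h0.
    have ps := solveL (uGR 0%N L0) ViVR h0.
    have hi := hnt i iL; rewrite /nt in hi.
    rewrite (_ : (i == 0%N) = false) in hi; last by apply/negbTE; rewrite -lt0n.
    have e2 := solveL (uGR i iL) ViVR hi.
    have ew : invmx (toR Lam) *m p i = toR (w i).
      rewrite ewj toRB /psis !toRM -ps.
      by rewrite -[in RHS]e2 opprB addrC subrK.
    have : invmx (toR Lam) *m theta i = 0.
      by apply: (addIr (toR (R:=R) (w i))); rewrite add0r -hLp.
    by move=> h; rewrite -(mulKVmx uLR (theta i)) h mulmx0.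
  + move=> hth i iL.
    have hLp' : forall j, (1 <= j < L)%N -> invmx (toR Lam) *m p j = toR (w j).
      move=> j /andP [j1 jL]; rewrite hLp // hth ?j1 ?jL // mulmx0 add0r //.
    have hdiv : forall j, (j < L)%N -> exists c, V *m (psi1 - psis) = Gam j *m c.
      move=> j jL; case: (posnP j) => [->|j0].
      * rewrite eVinv -toRM in hpsi0; have [c hc] := latE hpsi0.
        exists (c - n 0%N); rewrite hc /psis -!mulmxA -mulmxBr mulKVmx //.
        by rewrite -mulmxBr.
      * have jj : (1 <= j < L)%N by rewrite j0 jL.
        have [_ hl1] := hvarpi j jj.
        rewrite hLp' // eVinv -toRM -toRB in hl1.
        have [c1 hc1] := latE hl1.
        have := hpsii j jj; rewrite eVinv -toRM -toRB => /latE [c2 hc2].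
        exists (c2 - c1 - n j).
        rewrite (grp_id psi1 psis (varpi j) (Vi *m Gam j *m n j)) -ewj hc1 hc2.
        by rewrite -!mulmxBr -mulmxA mulKVmx.
    have [c hc] := prod_div dG cG hdiv.
    rewrite big_ltn // in hc.
    set A' := Vi *m Gam 0%N *m Gprod *m U1.
    have hd : psi1 - psis = A' *m (invmx U1 *m c).
      rewrite /A' -mulmxA mulKVmx // -[LHS](mulKmx uVm) hc.
      by rewrite !mulmxA.
    have dGp : \det Gprod != 0.
      rewrite /Gprod big_seq; apply: (big_ind (fun X : 'M[int]_D => \det X != 0)).
      * by rewrite det1 oner_neq0.
      * by move=> X Y hX hY; rewrite det_mulmx mulf_neq0.
      * by move=> j; rewrite mem_index_iota => /andP [_ jL]; apply: dG.
    have dA' : \det A' != 0.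
      rewrite /A' !det_mulmx !mulf_neq0 //.
      + by apply: unit_det0; rewrite unitmx_inv.
      + exact: dG.
      + exact: unit_det0.
    have hN1 : inN (toR (R:=R) A') psi1 by rewrite /A' !toRM -eVinv.
    have hn0 : floorv (invmx (toR (R:=R) (Mi 0%N)) *m toR m) = n 0%N.
      have [[x [hx ex]] _] := hrem 0%N L0.
      have uM0 : toR (R:=R) (Mi 0%N) \in unitmx.
        apply: toR_unit; rewrite /Mi det_mulmx mulf_neq0 //; exact: dG.
      have -> : toR (R:=R) m = toR (Mi 0%N) *m (toR (n 0%N) + x).
        by rewrite {1}(hn 0%N L0) toRD toRM ex mulmxDr.
      rewrite mulKmx //; apply/matrixP => a b; rewrite !mxE (ord1 b).
      apply/eqP; rewrite floor_eq intrD; have := hx a; case/andP => x0 x1.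
      by apply/andP; split; lra.
    have hN2 : inN (toR (R:=R) A') psis.
      move: hA1; rewrite hn0 => -[y [hy ey]]; exists y; split => //.
      by rewrite /psis /A' !toRM ey !toRM !mulmxA.
    have epsi : psi1 = psis := N_uniq dA' hN1 hN2 hd.
    rewrite /nt; case: eqP => [->|i0].
    * by rewrite epsi /psis !toRM -!mulmxA VVR mulKmx // uGR.
    * have jj : (1 <= i < L)%N by rewrite lt0n; apply/andP; split => //; apply/eqP.
      rewrite hLp' // epsi ewj toRB opprB addrC subrK !toRM -!mulmxA VVR mulKmx //.
      exact: uGR.
- move=> tau c hop hdr htau; apply: part2 => i /andP [i1 iL].
  have t0 : 0 <= tau by apply: le_trans (hdr 0%N L0); case: hN.
  have cpos : 0 < c.
    rewrite ltNge; apply/negP => c0.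
    have : lam / (4 * c) <= 0 by apply: mulr_ge0_le0; rewrite // invr_le0; lra.
    lra.
  have h1 := opnorm_bound (toR (R:=R) (dr i - dr 0%N)) hN hop.
  have h2 : nrm (toR (R:=R) (dr i - dr 0%N)) <= 2 * tau.
    rewrite toRB; apply: le_trans (nrmB _ _ hN) _.
    have := hdr i iL; have := hdr 0%N L0; lra.
  have h3 : c * tau < lam / 4.
    have -> : lam / 4 = c * (lam / (4 * c)) by field; rewrite gt_eqF.
    by rewrite ltr_pM2l.
  have h4 : c * nrm (toR (R:=R) (dr i - dr 0%N)) <= c * (2 * tau) by rewrite ler_pM2l.
  lra.
- move=> tau hdr /=.
  have Lp : 0 < (L%:R : R) by rewrite ltr0n.
  have -> : L%:R^-1 *: \sum_(0 <= i < L) toR (R:=R) (Mi i *m n i + rt i) - toR m = L%:R^-1 *: \sum_(0 <= i < L) toR (R:=R) (dr i).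
    rewrite (eq_big_nat _ _ (F2 := fun i => toR m + toR (dr i))); last first.
      move=> i /andP [_ iL]; rewrite /rt addrA -(hn i iL) toRD //.
    rewrite big_split /= sumr_const_nat subn0 -scaler_nat scalerDr scalerA mulVf ?gt_eqF //.
    by rewrite scale1r addrC addKr.
  case: (hN) => _ [_ [hs _]]; rewrite hs ger0_norm ?invr_ge0 ?ler0n //.
  apply: le_trans (ler_wpM2l _ (nrm_sum _ _ hN)) _; first by rewrite invr_ge0 ler0n.
  apply: le_trans (ler_wpM2l _ (ler_sum_nat (G := fun _ => tau) _)) _.
  + by rewrite invr_ge0 ler0n.
  + by move=> i /andP [_ iL]; apply: hdr.
  by rewrite sumr_const_nat subn0 -[tau *+ L]mulr_natr mulrCA mulVf ?gt_eqF // mulr1.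
Qed.
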